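(* Let $F$ be $(\ell,\omega)$-relatively smooth on $\mathcal X\cap\mathcal S$. For any $\rho>\ell$ and all $x\in\mathcal X\cap\mathcal S$, $$\rho^2D^{\mathrm{sym}}_\omega(\hat x,x^+)\le\frac{\ell}{\rho-\ell}\big(\Delta_\rho(x)+\Delta^+_\rho(x)\big).$$
   Context: Let $\mathcal X\subseteq\mathbb R^d$ be closed and convex, $\|\cdot\|$ a norm on $\mathbb R^d$. The problem is $\min_{x\in\mathcal X}\Phi(x):=F(x)+r(x)$, with $F$ differentiable and $r:\mathbb R^d\to\mathbb R$ convex, proper, lower semicontinuous. A DGF is $\omega:\mathrm{cl}(\mathcal S)\to\mathbb R$, $\mathcal S$ open with $\mathrm{ri}(\mathcal X)\subseteq\mathcal S$, $\omega$ continuously differentiable on $\mathcal S$ and $1$-strongly convex w.r.t. $\|\cdot\|$ on $\mathrm{cl}(\mathcal S)$; $D_\omega(x,y)=\omega(x)-\omega(y)-\langle\nabla\omega(y),x-y\rangle$, $D^{\mathrm{sym}}_\omega(x,y):=D_\omega(x,y)+D_\omega(y,x)$. For $\rho>0$ and $x\in\mathcal X\cap\mathcal S$: $\hat x:=\arg\min_{y\in\mathcal X}[\Phi(y)+\rho D_\omega(y,x)]$, $\Delta_\rho(x):=\rho^2D^{\mathrm{sym}}_\omega(\hat x,x)$; $x^+:=\arg\min_{y\in\mathcal X}[\langle\nabla F(x),y\rangle+r(y)+\rho D_\omega(y,x)]$, $\Delta^+_\rho(x):=\rho^2D^{\mathrm{sym}}_\omega(x^+,x)$ (minimizers assumed to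 exist). $F$ is $(\ell,\omega)$-relatively smooth on $\mathcal X\cap\mathcal S$ if for all $x,y\in\mathcal X\cap\mathcal S$: $-\ell D_\omega(x,y)\le F(x)-F(y)-\langle\nabla F(y),x-y\rangle\le\ell D_\omega(x,y)$. *)

(* Defs.v *)
From HB Require Import structures.
From mathcomp Require Import all_boot all_order all_algebra.
From mathcomp Require Import all_classical all_reals all_analysis.
Set Implicit Arguments. Unset Strict Implicit. Unset Printing Implicit Defensive.
Import Order.TTheory GRing.Theory Num.Theory.
Import numFieldNormedType.Exports.
Local Open Scope classical_set_scope.
Local Open Scope ring_scope.

Section Defs.
Variables (R : realType) (d : nat).
Notation V := 'rV[R]_d.

Definition dotp (u v : V) : R := \sum_(i < d) u 0 i * v 0 i.

Definition convex_setV (X : set V) : Prop :=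
  forall x y t, X x -> X y -> 0 <= t <= 1 -> X (t *: x + (1 - t) *: y).

Definition convex_funV (f : V -> R) : Prop :=
  forall x y t, 0 <= t <= 1 -> f (t *: x + (1 - t) *: y) <= t * f x + (1 - t) * f y.

Definition is_norm (N : V -> R) : Prop :=
  (forall x, N x = 0 -> x = 0) /\
  (forall (a : R) x, N (a *: x) = `|a| * N x) /\
  (forall x y, N (x + y) <= N x + N y).

Definition aff_hull (X : set V) : set V :=
  [set y | exists (n : nat) (p : 'I_n -> V) (w : 'I_n -> R),
      (forall i, X (p i)) /\ \sum_(i < n) w i = 1 /\ y = \sum_(i < n) w i *: p i].

Definition rel_interior (X : set V) : set V :=
  [set x | X x /\ exists e : R, 0 < e /\
      forall y, aff_hull X y -> ball x e y -> X y].

Definition is_gradient_on (A : set V) (f : V -> R) (g : V -> V) : Prop :=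
  forall x, A x -> differentiable f x /\ forall h, 'd f x h = dotp (g x) h.

Definition strongly_convex_on (N : V -> R) (A : set V) (w : V -> R) : Prop :=
  forall x y t, A x -> A y -> 0 <= t <= 1 -> A (t *: x + (1 - t) *: y) ->
    w (t *: x + (1 - t) *: y) <=
      t * w x + (1 - t) * w y - t * (1 - t) / 2 * (N (x - y)) ^+ 2.

Definition is_DGF (N : V -> R) (X S : set V) (w : V -> R) (gw : V -> V) : Prop :=
  [/\ open S, rel_interior X `<=` S,
      is_gradient_on S w gw,
      (forall x, S x -> {for x, continuous gw}) &
      strongly_convex_on N (closure S) w].

Definition breg (w : V -> R) (gw : V -> V) (x y : V) : R :=
  w x - w y - dotp (gw y) (x - y).
Definition breg_sym (w : V -> R) (gw : V -> V) (x y : V) : R :=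
  breg w gw x y + breg w gw y x.

Definition rel_smooth (l : R) (F : V -> R) (gF : V -> V)
    (w : V -> R) (gw : V -> V) (X S : set V) : Prop :=
  forall x y, X x -> S x -> X y -> S y ->
    - l * breg w gw x y <= F x - F y - dotp (gF y) (x - y) <= l * breg w gw x y.

Definition is_argmin (X : set V) (phi : V -> R) (z : V) : Prop :=
  X z /\ forall y, X y -> phi z <= phi y.

End Defs.

(* Main.v *)
Require Import Defs.
From HB Require Import structures.
From mathcomp Require Import all_boot all_order all_algebra.
From mathcomp Require Import all_classical all_reals all_analysis.
From mathcomp Require Import ring lra.
Import Order.TTheory GRing.Theory Num.Theory.
Import numFieldNormedType.Exports.
Local Open Scope classical_set_scope.
Local Open Scope ring_scope.

Lemma fo (R : realType) (d : nat) (f : 'rV[R]_d -> R) a h c :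
  differentiable f a ->
  (forall t : R, 0 < t <= 1 -> c <= (f (a + t *: h) - f a) / t) -> c <= 'd f a h.
Proof.
move=> df H.
have := @diff_derivable _ _ _ f a h df.
rewrite /derivable => cv.
rewrite leNgt; apply/negP => lt.
have /cvgrPdist_lt /(_ (c - 'd f a h)) := cv.
rewrite subr_gt0 => /(_ lt).
rewrite (_ : lim _ = 'd f a h); last by rewrite -deriveE.
rewrite near_withinE /= => /nbhs_ballP [e /= e0 He].
pose t := Num.min (e / 2) 1.
have t0 : 0 < t by rewrite lt_min divr_gt0 // ltr01.
have t1 : t <= 1 by rewrite ge_min lexx orbT.
have := He t; rewrite /ball /= sub0r normrN gtr0_norm //.
have te : t < e.
  by rewrite gt_min ltr_pdivrMr // ltr_pMr // ltr1n.
move=> /(_ te (lt0r_neq0 t0)).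
have := H t; rewrite t0 t1 /= => /(_ isT).
rewrite addrC [_ *: _]/= mulrC => Hc.
rewrite distrC => /(le_lt_trans (ler_norm _)).
rewrite ltrD2r (addrC (t *: h)) => Hq; rewrite (addrC (- f a)) in Hc.
by have := le_lt_trans Hc Hq; rewrite ltxx.
Qed.

Section dot.
Variables (R : realType) (d : nat).
Implicit Types (u v z : 'rV[R]_d).
Lemma dotpDr u v z : dotp u (v + z) = dotp u v + dotp u z.
Proof. rewrite /dotp -big_split /=; apply: eq_bigr => i _; rewrite !mxE; ring. Qed.
Lemma dotpNr u v : dotp u (- v) = - dotp u v.
Proof. rewrite /dotp -sumrN; apply: eq_bigr => i _; rewrite !mxE; ring. Qed.
Lemma dotpBr u v z : dotp u (v - z) = dotp u v - dotp u z.
Proof. by rewrite dotpDr dotpNr. Qed.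
Lemma dotpZr u (k : R) v : dotp u (k *: v) = k * dotp u v.
Proof. rewrite /dotp mulr_sumr; apply: eq_bigr => i _; rewrite !mxE; ring. Qed.
Lemma dotp0l v : dotp (0 : 'rV[R]_d) v = 0.
Proof. rewrite /dotp big1 // => i _; rewrite !mxE; ring. Qed.
End dot.

Lemma opt (R : realType) d (X : set 'rV[R]_d) (r w G : 'rV[R]_d -> R)
  (gw : 'rV[R]_d -> 'rV[R]_d) (u x a b : 'rV[R]_d) (rho : R) :
  convex_setV X -> convex_funV r -> X a -> X b ->
  (forall y, X y -> G a + dotp u a + r a + rho * breg w gw a x <=
                    G y + dotp u y + r y + rho * breg w gw y x) ->
  differentiable G a -> differentiable w a ->
  0 <= 'd G a (b - a) + dotp u (b - a) + (r b - r a) +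
       rho * ('d w a (b - a) - dotp (gw x) (b - a)).
Proof.
move=> cX cr Xa Xb op dG dw.
set h := b - a.
have := @fo R d (G + rho *: w) a h
  (- dotp u h - (r b - r a) + rho * dotp (gw x) h).
rewrite diffD // ?diffZ //=; last exact: differentiableZ.
move=> H.
have {H} : - dotp u h - (r b - r a) + rho * dotp (gw x) h <=
   'd G a h + rho * 'd w a h.
  apply: H; first by apply: differentiableD => //; exact: differentiableZ.
  move=> t /andP [t0 t1].
  rewrite ler_pdivlMr //=.
  have ez : a + t *: h = t *: b + (1 - t) *: a.
    by apply/matrixP => i j; rewrite /h !mxE; ring.
  have Xz : X (a + t *: h) by rewrite ez; apply: cX => //; rewrite t1 ltW.
  have := op _ Xz.
  have := cr b a t; rewrite -ez => /(_ _)/wrap[]; first by rewrite t1 ltW.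
  clearbody h.
  have E : forall y, (G + rho *: w) y = G y + rho * w y by [].
  rewrite !E.
  rewrite /breg !dotpBr !dotpDr !dotpZr.
  move=> H1 H2; lra.
lra.
Qed.

Theorem lemma4 (R : realType) (d : nat)
  (X S : set 'rV[R]_d) (N : 'rV[R]_d -> R)
  (F r w : 'rV[R]_d -> R) (gF gw : 'rV[R]_d -> 'rV[R]_d)
  (l rho : R) (x xhat xplus : 'rV[R]_d) :
  closed X -> convex_setV X ->
  is_norm N ->
  is_gradient_on setT F gF ->
  convex_funV r -> lower_semicontinuous (fun y => (r y)%:E) ->
  is_DGF N X S w gw ->
  rel_smooth l F gF w gw X S ->
  0 < rho -> l < rho ->
  X x -> S x ->
  is_argmin X (fun y => F y + r y + rho * breg w gw y x) xhat -> S xhat ->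
  is_argmin X (fun y => dotp (gF x) y + r y + rho * breg w gw y x) xplus -> S xplus ->
  rho ^+ 2 * breg_sym w gw xhat xplus <=
    l / (rho - l) * (rho ^+ 2 * breg_sym w gw xhat x + rho ^+ 2 * breg_sym w gw xplus x).
Proof.
move=> _ cX _ gF_ cr _ [_ _ gw_ _ _] rs rho0 lrho Xx Sx [Xa opa] Sa [Xb opb] Sb.
have [dFa eFa] := gF_ xhat I.
have [dwa ewa] := gw_ xhat Sa.
have [dwb ewb] := gw_ xplus Sb.
have A := @opt R d X r w F gw 0 x xhat xplus rho cX cr Xa Xb.
have B := @opt R d X r w (cst 0) gw (gF x) x xplus xhat rho cX cr Xb Xa.
have {A} A : 0 <= dotp (gF xhat) (xplus - xhat) + dotp 0 (xplus - xhat) + (r xplus - r xhat) +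
       rho * (dotp (gw xhat) (xplus - xhat) - dotp (gw x) (xplus - xhat)).
  rewrite -eFa -ewa; apply: A => // y Xy; rewrite !dotp0l !addr0; exact: opa.
have {B} B : 0 <= 0 + dotp (gF x) (xhat - xplus) + (r xhat - r xplus) +
       rho * (dotp (gw xplus) (xhat - xplus) - dotp (gw x) (xhat - xplus)).
  rewrite -ewb; have := B; rewrite diff_cst /=; apply => //.
    by move=> y Xy; rewrite /= !add0r; exact: opb.
have s1 := rs _ _ Xb Sb Xa Sa.
have s2 := rs _ _ Xa Sa Xx Sx.
have s3 := rs _ _ Xb Sb Xx Sx.
have s4 := rs _ _ Xa Sa Xb Sb.
have s5 := rs _ _ Xx Sx Xa Sa.
have s6 := rs _ _ Xx Sx Xb Sb.
have key : (rho - l) * breg_sym w gw xhat xplus <=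
           l * (breg_sym w gw xhat x + breg_sym w gw xplus x).
  move: A B s1 s2 s3 s4 s5 s6.
  rewrite /breg_sym /breg !dotp0l !dotpBr.
  move=> A B /andP[s1 s1'] /andP[s2 s2'] /andP[s3 s3'] /andP[s4 s4'] /andP[s5 s5'] /andP[s6 s6'].
  lra.
rewrite -mulrDr mulrCA ler_wpM2l ?sqr_ge0 //.
rewrite mulrAC ler_pdivlMr ?subr_gt0 // mulrC.
exact: key.
Qed.
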